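(* Let $T$ be a complete o-minimal theory expanding the theory of real closed ordered fields. Let $(\mathbb{U},\mathcal{O}')\models T_{\mathrm{convex}}$, let $\mathbb{E}\preceq\mathbb{E}_1\prec\mathbb{U}$ with $\mathbb{E}\not\subseteq\mathcal{O}'$, and let $x\in\mathbb{U}\setminus\mathbb{E}$. Set $\mathcal{O}:=\mathcal{O}'\cap\mathbb{E}$ and $\mathcal{O}_1:=\mathcal{O}'\cap\mathbb{E}_1$. Suppose that no element of $\mathbb{E}_1$ realizes $\mathrm{tp}(x/\mathbb{E})$ (the type in the sense of $T$). Then $x$ is weakly immediate over $(\mathbb{E},\mathcal{O})$ if and only if it is weakly immediate over $(\mathbb{E}_1,\mathcal{O}_1)$. If this is the case, then $\mathrm{tp}(x/(\mathbb{E},\mathcal{O}))$ and $\mathrm{tp}(x/(\mathbb{E}_1,\mathcal{O}_1))$ have the same cofinality.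
   Context: $T_{\mathrm{convex}}$ is the theory of pairs $(\mathbb{U},\mathcal{O}')$ with $\mathbb{U}\models T$ and $\mathcal{O}'\ne\mathbb{U}$ a convex subring closed under all continuous $\emptyset$-definable functions. For $\mathbb{F}\preceq\mathbb{U}$, $x$ is weakly immediate over $(\mathbb{F},\mathcal{O}'\cap\mathbb{F})$ if $\{\mathrm{val}_{\mathcal{O}'}(x-c):c\in\mathbb{F}\}$ has no maximum; the cofinality of its type is the cofinality of this ordered set. *)

(* Defs.v *)
From HB Require Import structures.
From mathcomp Require Import all_boot all_order all_algebra.
Set Implicit Arguments. Unset Strict Implicit. Unset Printing Implicit Defensive.
Import Order.TTheory GRing.Theory Num.Theory.
Local Open Scope ring_scope.

(* An o-minimal expansion of a real closed field R, presented (as in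
   van den Dries, "Tame topology and o-minimal structures") by its
   collection of 0-definable sets: [dsets n A] means that A, a set of
   lists of length n over R, is 0-definable. *)
Record omin_struct (R : rcfType) := OMinStruct {
  dsets : nat -> (seq R -> Prop) -> Prop;
  ds_ext : forall n (A B : seq R -> Prop), dsets n A ->
    (forall s, A s <-> B s) -> dsets n B;
  ds_size : forall n A s, dsets n A -> A s -> size s = n;
  ds_full : forall n, dsets n (fun s => size s = n);
  ds_compl : forall n A, dsets n A -> dsets n (fun s => size s = n /\ ~ A s);
  ds_union : forall n A B, dsets n A -> dsets n B ->
    dsets n (fun s => A s \/ B s);
  ds_prod : forall n m A B, dsets n A -> dsets m B ->
    dsets (n + m) (fun s => A (take n s) /\ B (drop n s));
  ds_diag : forall n i j, (i < n)%N -> (j < n)%N ->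
    dsets n (fun s => size s = n /\ nth 0 s i = nth 0 s j);
  ds_proj : forall n A, dsets n.+1 A ->
    dsets n (fun s => exists y, A (rcons s y));
  ds_lt : dsets 2 (fun s => exists a b, s = [:: a; b] /\ a < b);
  ds_add : dsets 3 (fun s => exists a b, s = [:: a; b; a + b]);
  ds_mul : dsets 3 (fun s => exists a b, s = [:: a; b; a * b]);
  ds_omin : forall n A (e : seq R), dsets n.+1 A -> size e = n ->
    exists l : seq (interval R),
      forall y, A (rcons e y) <-> has (fun i => y \in i) l
}.

Section Defs.
Variables (R : rcfType) (M : omin_struct R).

Definition tuple_in (E : R -> Prop) (e : seq R) := forall a, a \in e -> E a.

(* E (a subset of the model) is the universe of an elementary substructure
   (Tarski--Vaught test: every nonempty set definable with parameters in E
   has a point in E). *)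
Definition elem_sub (E : R -> Prop) :=
  forall n A (e : seq R), dsets M n.+1 A -> size e = n -> tuple_in E e ->
    (exists y, A (rcons e y)) -> exists y, E y /\ A (rcons e y).

Definition realizes_type (E : R -> Prop) (x y : R) :=
  forall n A (e : seq R), dsets M n.+1 A -> size e = n -> tuple_in E e ->
    (A (rcons e y) <-> A (rcons e x)).

Definition continuous_fun (f : R -> R) :=
  forall a eps, 0 < eps ->
    exists2 d, 0 < d & forall b, `|b - a| < d -> `|f b - f a| < eps.

Definition Tconvex (O : R -> Prop) :=
  O 0 /\ O 1 /\
  (forall a b, O a -> O b -> O (a - b)) /\
  (forall a b, O a -> O b -> O (a * b)) /\
  (forall a b c, O a -> O c -> (a <= b) -> (b <= c) -> O b) /\
  (exists a, ~ O a) /\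
  (forall f, continuous_fun f ->
     dsets M 2 (fun s => exists a, s = [:: a; f a]) ->
     forall a, O a -> O (f a)).

(* valuation order of O: val a <= val b  iff  b = o * a for some o in O *)
Definition vle (O : R -> Prop) (a b : R) := exists2 o, O o & b = o * a.

Definition weakly_immediate (O : R -> Prop) (F : R -> Prop) (x : R) :=
  ~ exists c, F c /\ forall c', F c' -> vle O (x - c') (x - c).

Definition cofinal_in (O : R -> Prop) (F : R -> Prop) (x : R) (C : R -> Prop) :=
  (forall c, C c -> F c) /\
  forall c', F c' -> exists c, C c /\ vle O (x - c') (x - c).

Definition card_le (C1 C2 : R -> Prop) :=
  exists f : R -> R, (forall a, C1 a -> C2 (f a)) /\
    (forall a b, C1 a -> C1 b -> f a = f b -> a = b).

Definition cof_le (O : R -> Prop) (x : R) (F1 F2 : R -> Prop) :=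
  forall C2, cofinal_in O F2 x C2 ->
    exists C1, cofinal_in O F1 x C1 /\ card_le C1 C2.

Definition same_cof (O : R -> Prop) (x : R) (F1 F2 : R -> Prop) :=
  cof_le O x F1 F2 /\ cof_le O x F2 F1.

End Defs.

(* Main.v *)
Require Import Defs.
From HB Require Import structures.
From mathcomp Require Import all_boot all_order all_algebra zify lra ring.
From Stdlib Require Import ClassicalEpsilon.
From Stdlib Require Import Classical.
Set Implicit Arguments. Unset Strict Implicit. Unset Printing Implicit Defensive.
Import Order.TTheory GRing.Theory Num.Theory.
Local Open Scope ring_scope.

Section Tool.
Variables (R : rcfType) (M : omin_struct R).
Local Notation D := (dsets M).

Lemma ds_and n A B : D n A -> D n B -> D n (fun s => A s /\ B s).
Proof.
move=> hA hB.
apply: (ds_ext (ds_compl (ds_union (ds_compl hA) (ds_compl hB)))) => s; split.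
- move=> [hs hn]; split; apply: NNPP => h; apply: hn; tauto.
- move=> [a b]; split; first exact: ds_size hA a.
  tauto.
Qed.

Lemma ds_impl n A B : D n A -> D n B -> D n (fun s => size s = n /\ (A s -> B s)).
Proof.
move=> hA hB.
apply: (ds_ext (ds_and (ds_full M n) (ds_union (ds_compl hA) hB))) => s; split.
- move=> [hs [[_ h]|h]]; split => //; tauto.
- move=> [hs h]; split => //; case: (classic (A s)); tauto.
Qed.

Lemma ds_iff n A B : D n A -> D n B -> D n (fun s => size s = n /\ (A s <-> B s)).
Proof.
move=> hA hB.
apply: (ds_ext (ds_and (ds_impl hA hB) (ds_impl hB hA))) => s; tauto.
Qed.

Lemma ds_all n A : D n.+1 A -> D n (fun s => size s = n /\ forall y, A (rcons s y)).
Proof.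
move=> hA.
apply: (ds_ext (ds_compl (ds_proj (ds_compl hA)))) => s; split.
- move=> [hs hn]; split => // y; apply: NNPP => h; apply: hn; exists y.
  by rewrite size_rcons hs.
- move=> [hs h]; split => //; move=> [y [_ hy]]; exact: hy.
Qed.

Lemma ds_projs n m B : D (n + m) B ->
  D n (fun s => exists r, size r = m /\ B (s ++ r)).
Proof.
elim: m B => [|m IH] B hB.
  rewrite addn0 in hB; apply: (ds_ext hB) => s; split.
  - by move=> h; exists [::]; rewrite cats0.
  - by move=> [r [/size0nil -> ]]; rewrite cats0.
rewrite addnS in hB.
apply: (ds_ext (IH _ (ds_proj hB))) => s; split.
- move=> [r [hr [y hy]]]; exists (rcons r y); split; first by rewrite size_rcons hr.
  by rewrite -rcons_cat.
- move=> [r [hr h]]; case/lastP: r hr h => [|r y]; first by [].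
  rewrite size_rcons => -[hr] h; exists r; split => //; exists y.
  by rewrite rcons_cat.
Qed.

Lemma ds_bigand k m (Dj : nat -> seq R -> Prop) :
  (forall j, (j < m)%N -> D k (Dj j)) ->
  D k (fun s => size s = k /\ forall j, (j < m)%N -> Dj j s).
Proof.
elim: m => [|m IH] h.
  apply: (ds_ext (ds_full M k)) => s; split; [move=> ->; split => // | by case].
apply: (ds_ext (ds_and (IH (fun j hj => h j (ltnW hj))) (h m (ltnSn m)))) => s; split.
- move=> [[hs H] hm]; split => // j; rewrite ltnS leq_eqVlt => /orP[/eqP -> //|].
  exact: H.
- move=> [hs H]; split; last exact: H.
  by split => // j hj; apply: H; apply: ltnW.
Qed.

Lemma ds_pull m A (idx : seq nat) n : D m A -> size idx = m ->
  (forall i, i \in idx -> (i < n)%N) ->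
  D n (fun s => size s = n /\ A (map (nth 0 s) idx)).
Proof.
move=> hA hidx hlt.
pose Dg := fun j (s : seq R) => size s = (n + m)%N /\ nth 0 s (n + j) = nth 0 s (nth 0%N idx j).
have hD : D (n + m) (fun s => (size (take n s) = n /\ A (drop n s)) /\
   (size s = (n + m)%N /\ forall j, (j < m)%N -> Dg j s)).
  apply: ds_and; first exact: ds_prod (ds_full M n) hA.
  apply: ds_bigand => j hj; apply: ds_diag; first lia.
  have : nth 0%N idx j \in idx by apply: mem_nth; rewrite hidx.
  move/hlt; lia.
apply: (ds_ext (ds_projs hD)) => s; split.
- move=> [r [hr [[hs1 hA'] [hs H]]]].
  have hsn : size s = n by move: hs; rewrite size_cat hr; lia.
  split => //.
  have -> : map (nth 0 s) idx = r.
    apply: (@eq_from_nth _ 0); first by rewrite size_map hidx hr.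
    rewrite size_map hidx => j hj.
    have [_ ] := H j hj.
    rewrite (nth_map 0%N) ?hidx // nth_cat hsn ltnNge leq_addr /= addKn => ->.
    rewrite nth_cat hsn.
    have : nth 0%N idx j \in idx by apply: mem_nth; rewrite hidx.
    by move/hlt => ->.
  by move: hA'; rewrite drop_size_cat.
- move=> [hs hA']; exists (map (nth 0 s) idx); split; first by rewrite size_map.
  split; first by rewrite take_size_cat // drop_size_cat.
  split; first by rewrite size_cat size_map hs hidx.
  move=> j hj; split; first by rewrite size_cat size_map hs hidx.
  rewrite nth_cat hs ltnNge leq_addr /= addKn (nth_map 0%N) ?hidx //.
  rewrite nth_cat hs.
  have : nth 0%N idx j \in idx by apply: mem_nth; rewrite hidx.
  by move/hlt => ->.
Qed.


Lemma nth_ecat (e l : seq R) k : nth 0 (e ++ l) (size e + k) = nth 0 l k.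
Proof. by rewrite nth_cat ltnNge leq_addr /= addKn. Qed.

Lemma nth_ecat0 (e l : seq R) : nth 0 (e ++ l) (size e) = nth 0 l 0.
Proof. by rewrite -[size e]addn0 nth_ecat. Qed.

Lemma map_iota_take (s : seq R) n k : (n <= size s)%N ->
  map (nth 0 s) (iota 0 n ++ [:: k]) = rcons (take n s) (nth 0 s k).
Proof. by move=> h; rewrite map_cat map_nth_iota0 // cats1. Qed.

Definition NB (P : R -> Prop) t := exists u w, u < t /\ t < w /\
  forall v, u < v -> v < w -> (P v <-> P t).

Lemma ds_lt2 k i j : (i < k)%N -> (j < k)%N ->
  D k (fun s => size s = k /\ nth 0 s i < nth 0 s j).
Proof.
move=> hi hj.
have h : D k (fun s => size s = k /\ (fun s' => exists a b, s' = [:: a; b] /\ a < b) (map (nth 0 s) [:: i; j])).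
  by apply: ds_pull (ds_lt M) _ _ => // l; rewrite !inE => /orP[]/eqP->.
apply: (ds_ext h) => s /=; split.
- by move=> [hs [a [b [[-> ->] h']]]].
- by move=> [hs h']; split => //; exists (nth 0 s i), (nth 0 s j).
Qed.

Lemma ds_brk n A : D n.+1 A -> exists2 B, D n.+1 B &
  forall e t, size e = n -> (B (rcons e t) <-> ~ NB (fun v => A (rcons e v)) t).
Proof.
move=> hA.
have hP : forall k, (k < 4)%N -> D n.+4 (fun s => size s = n.+4 /\ A (rcons (take n s) (nth 0 s (n + k)))).
  move=> k hk.
  have h : D n.+4 (fun s => size s = n.+4 /\ A (map (nth 0 s) (iota 0 n ++ [:: (n + k)%N]))).
    apply: ds_pull hA _ _; first by rewrite size_cat size_iota /= addn1.
    move=> i; rewrite mem_cat mem_iota !inE => /orP[|/eqP->]; lia.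
  apply: (ds_ext h) => s; split; move=> [hs h']; split => //; move: h';
    (have hn : (n <= size s)%N by rewrite hs; lia); by rewrite map_iota_take.
pose P4 := fun s : seq R => size s = n.+4 /\ (nth 0 s (n+1) < nth 0 s (n+3) /\ nth 0 s (n+3) < nth 0 s (n+2) ->
   (A (rcons (take n s) (nth 0 s (n+3))) <-> A (rcons (take n s) (nth 0 s (n + 0)%N)))).
have h4 : D n.+4 P4.
  have h := ds_impl (ds_and (@ds_lt2 n.+4 (n+1) (n+3) ltac:(lia) ltac:(lia))
                           (@ds_lt2 n.+4 (n+3) (n+2) ltac:(lia) ltac:(lia)))
                   (ds_iff (hP 3%N isT) (hP 0%N isT)).
  apply: (ds_ext h) => s; rewrite /P4; tauto.
have h3 := ds_all h4.
have h3' := ds_and (ds_and (@ds_lt2 n.+3 (n+1) n ltac:(lia) ltac:(lia))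
                           (@ds_lt2 n.+3 n (n+2) ltac:(lia) ltac:(lia))) h3.
have h1 := ds_proj (ds_proj h3').
exists (fun s => size s = n.+1 /\ ~ (exists y y0, ((size (rcons (rcons s y) y0) = n.+3 /\ nth 0 (rcons (rcons s y) y0) (n + 1) < nth 0 (rcons (rcons s y) y0) n) /\
        size (rcons (rcons s y) y0) = n.+3 /\ nth 0 (rcons (rcons s y) y0) n < nth 0 (rcons (rcons s y) y0) (n + 2)) /\
       size (rcons (rcons s y) y0) = n.+3 /\ (forall y1 : R, P4 (rcons (rcons (rcons s y) y0) y1)))).
  exact: ds_compl h1.
move=> e t he; subst n.
have E3 : forall u w, rcons (rcons (rcons e t) u) w = e ++ [:: t; u; w].
  by move=> u w; rewrite -!cats1 -!catA.
have E4 : forall u w v, rcons (rcons (rcons (rcons e t) u) w) v = e ++ [:: t; u; w; v].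
  by move=> u w v; rewrite -!cats1 -!catA.
rewrite /NB; split.
- move=> [_ hn] [u [w [hu [hw hv]]]]; apply: hn; exists u, w.
  rewrite E3 !size_cat /= addn3 !nth_ecat ?nth_ecat0 /=; split; first by split; split.
  split => // v; rewrite /P4 -E3 E4 size_cat /= addn4 take_size_cat // !nth_ecat ?nth_ecat0 /=.
  split => // -[g1 g2]; exact: hv.
- move=> hn; split; first by rewrite size_rcons.
  move=> [u [w [[[_ hu] [_ hw]] [_ hv]]]]; apply: hn; exists u, w.
  move: hu hw; rewrite E3 !nth_ecat ?nth_ecat0 /= => hu hw.
  split => //; split => // v g1 g2.
  have [_ ] := hv v; rewrite E4 take_size_cat // !nth_ecat ?nth_ecat0 /=; apply; by split.
Qed.


Lemma fin_in_E (E : R -> Prop) : elem_sub M E -> forall N n A e (L : seq R),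
  D n.+1 A -> size e = n -> tuple_in E e -> (size L <= N)%N ->
  (forall t, A (rcons e t) -> t \in L) -> forall t, A (rcons e t) -> E t.
Proof.
move=> HE; elim=> [|N IH] n A e L hA he hE hL hsub t ht.
  by move: hL (hsub t ht); rewrite leqn0 => /nilP ->.
have [b [Eb Ab]] := HE n A e hA he hE (ex_intro _ t ht).
case: (eqVneq t b) => [->//|tb].
have hA' : D n.+2 (fun s => (size s = n.+2 /\ A (rcons (take n s) (nth 0 s (n+1)))) /\
     (size s = n.+2 /\ ~ (size s = n.+2 /\ nth 0 s n = nth 0 s (n+1)))).
  apply: ds_and; last by apply: ds_compl; apply: ds_diag; lia.
  have h : D n.+2 (fun s => size s = n.+2 /\ A (map (nth 0 s) (iota 0 n ++ [:: (n + 1)%N]))).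
    apply: ds_pull hA _ _; first by rewrite size_cat size_iota /= addn1.
    move=> i; rewrite mem_cat mem_iota !inE => /orP[|/eqP->]; lia.
  apply: (ds_ext h) => s; split; move=> [hs h']; split => //; move: h';
    (have hn : (n <= size s)%N by rewrite hs; lia); by rewrite map_iota_take.
subst n.
have E2 : forall u, rcons (rcons e b) u = e ++ [:: b; u].
  by move=> u; rewrite -!cats1 -!catA.
apply: (IH (size e).+1 _ (rcons e b) (filter (predC1 b) L) hA').
- by rewrite size_rcons.
- by move=> a; rewrite mem_rcons inE => /orP[/eqP->//|]; apply: hE.
- rewrite size_filter -ltnS; apply: leq_trans hL.
  have := count_predC (predC1 b) L.
  have : (0 < count (predC (predC1 b)) L)%N.
    rewrite -has_count; apply/hasP; exists b; first exact: hsub.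
    by rewrite /= negbK.
  by move=> h1 <-; rewrite -[X in (X < _)%N]addn0 ltn_add2l.
- move=> u; rewrite E2 take_size_cat // nth_ecat ?nth_ecat0 /= => -[[_ hu] [_ hn]].
  rewrite mem_filter /= hsub // andbT; apply/eqP => hub; apply: hn; split => //.
  by rewrite size_cat /= addn2.
- rewrite E2 take_size_cat // nth_ecat ?nth_ecat0 /=; split; split => //.
  + by rewrite size_cat /= addn2.
  + by rewrite size_cat /= addn2.
  + by move=> [_ h]; rewrite h eqxx in tb.
Qed.


Definition bvals (b : itv_bound R) : seq R := if b is BSide _ a then [:: a] else [::].
Definition ends (i : interval R) : seq R := let: Interval l u := i in bvals l ++ bvals u.

Lemma lteif_const (c a b v v' : R) (C : bool) : (c <= a \/ b <= c) -> a < v < b -> a < v' < b ->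
  ((c < v ?<= if C) = (c < v' ?<= if C)) /\ ((v < c ?<= if C) = (v' < c ?<= if C)).
Proof.
move=> hc /andP[h1 h2] /andP[h3 h4].
case: C => /=; split; apply/idP/idP => h; case: hc => hc; lra.
Qed.

Lemma itv_const (i : interval R) a b v v' :
  (forall k, k \in ends i -> ~ (a < k < b)) -> a < v < b -> a < v' < b ->
  (v \in i) = (v' \in i).
Proof.
move=> hk hv hv'.
have hc : forall k, k \in ends i -> k <= a \/ b <= k.
  move=> k /hk h; case: (leP k a) => ka; first by left.
  case: (leP b k) => bk; first by right.
  by exfalso; apply: h; rewrite ka bk.
case: i hc {hk} => [l u] hc; rewrite !in_itv.
have e1 : match l with BSide b0 lb => lb < v ?<= if b0 | BInfty b0 => b0 end =
          match l with BSide b0 lb => lb < v' ?<= if b0 | BInfty b0 => b0 end.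
  case: l hc => [bl cl|bl] hc //.
  have hcl : cl \in ends (Interval (BSide bl cl) u) by rewrite /= mem_head.
  by have [-> _] := lteif_const bl (hc cl hcl) hv hv'.
have e2 : match u with BSide b0 ub => v < ub ?<= if ~~ b0 | BInfty b0 => ~~ b0 end =
          match u with BSide b0 ub => v' < ub ?<= if ~~ b0 | BInfty b0 => ~~ b0 end.
  case: u hc => [bu cu|bu] hc //.
  have hcu : cu \in ends (Interval l (BSide bu cu)) by rewrite /= mem_cat mem_head orbT.
  by have [_ ->] := lteif_const (~~ bu) (hc cu hcu) hv hv'.
by rewrite e1 e2.
Qed.

Definition SCprop (P : R -> Prop) (L : seq R) := forall a b v v',
  (forall k, k \in L -> ~ (a < k < b)) -> a < v < b -> a < v' < b -> (P v <-> P v').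

Lemma SC_omin (P : R -> Prop) (l : seq (interval R)) :
  (forall y, P y <-> has (fun i => y \in i) l) -> SCprop P (flatten (map ends l)).
Proof.
move=> hP a b v v' hk hv hv'; rewrite !hP.
rewrite (@eq_in_has _ (fun i : interval R => v \in i) (fun i : interval R => v' \in i)) //.
move=> i il /=; apply: (itv_const _ hv hv') => k ki; apply: hk.
by apply/flatten_mapP; exists i.
Qed.

Lemma exists_below (L : seq R) t : exists u, u < t /\ forall k, k \in L -> k < t -> k <= u.
Proof.
elim: L => [|a L [u [ut hu]]]; first by exists (t - 1); split => //; lra.
case: (ltP a t) => at'.
- exists (Num.max u a); split; first by rewrite gt_max ut at'.
  move=> k; rewrite inE => /orP[/eqP-> _|kL kt]; first by rewrite le_max lexx orbT.
  by rewrite le_max hu.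
- exists u; split => // k; rewrite inE => /orP[/eqP-> h|]; [lra|exact: hu].
Qed.

Lemma exists_above (L : seq R) t : exists w, t < w /\ forall k, k \in L -> t < k -> w <= k.
Proof.
elim: L => [|a L [u [ut hu]]]; first by exists (t + 1); split => //; lra.
case: (ltP t a) => at'.
- exists (Num.min u a); split; first by rewrite lt_min ut at'.
  move=> k; rewrite inE => /orP[/eqP-> _|kL kt]; first by rewrite ge_min lexx orbT.
  by rewrite ge_min hu.
- exists u; split => // k; rewrite inE => /orP[/eqP-> h|]; [lra|exact: hu].
Qed.

Lemma NB_notin P L : SCprop P L -> forall t, t \notin L -> NB P t.
Proof.
move=> hSC t tL.
have [u [ut hu]] := exists_below L t.
have [w [tw hw]] := exists_above L t.
exists u, w; split => //; split => // v uv vw.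
apply: (hSC u w) => //; last by rewrite ut tw.
- move=> k kL /andP[uk kw].
  case: (ltgtP k t) => [kt|tk|kt].
  + by have := hu k kL kt; lra.
  + by have := hw k kL tk; lra.
  + by move: tL; rewrite -kt kL.
- by rewrite uv vw.
Qed.


Lemma count_lt (p1 p2 : pred R) (s : seq R) k :
  (forall z, p1 z -> p2 z) -> k \in s -> p2 k -> ~~ p1 k -> (count p1 s < count p2 s)%N.
Proof.
move=> h12; elim: s => [//|a s IH]; rewrite inE /= => /orP[/eqP <-|ks] h2 h1.
  rewrite h2 (negbTE h1) add0n add1n ltnS; apply: sub_count => z; exact: h12.
have := IH ks h2 h1.
case e1: (p1 a); first by rewrite (h12 a e1); rewrite !add1n ltnS.
by rewrite add0n => h; apply: (leq_trans h); apply: leq_addl.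
Qed.

Lemma chain_base P L (hSC : SCprop P L) y x : y < x ->
  (forall k, k \in L -> ~ (y < k < x)) -> NB P y -> NB P x -> (P y <-> P x).
Proof.
move=> yx hk [u [w [uy [yw hy]]]] [u' [w' [ux [xw hx]]]].
have [m [ym [mw mx]]] : exists m, y < m /\ m <= w /\ m <= x.
  by case: (leP w x) => h; [exists w | exists x]; split => //; lra.
have [m' [m'x [um' ym']]] : exists m', m' < x /\ u' <= m' /\ y <= m'.
  by case: (leP u' y) => h; [exists y | exists u']; split => //; lra.
pose v := (y + m) / 2; pose v' := (m' + x) / 2.
have hv1 : y < v by rewrite /v; lra.
have hv2 : v < m by rewrite /v; lra.
have hv'1 : m' < v' by rewrite /v'; lra.
have hv'2 : v' < x by rewrite /v'; lra.
have := hy v ltac:(lra) ltac:(lra).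
have := hx v' ltac:(lra) ltac:(lra).
have := hSC y x v v' hk ltac:(apply/andP; split; lra) ltac:(apply/andP; split; lra).
tauto.
Qed.

Lemma chain P L (hSC : SCprop P L) (N : nat) : forall y x : R, y <= x ->
  (count (fun k : R => (y < k)%R && (k < x)%R) L <= N)%N ->
  (forall t, y <= t -> t <= x -> NB P t) -> (P y <-> P x).
Proof.
elim: N => [|N IH] y x yx hc hNB.
- case: (eqVneq y x) => [->//|nyx].
  have yx' : y < x by rewrite lt_neqAle nyx yx.
  apply: (chain_base hSC yx').
  + move=> k kL hk; move: hc; rewrite leqn0 -(negbK (_ == _)) -lt0n -has_count.
    by move/hasP; apply; exists k.
  + by apply: hNB; rewrite ?lexx.
  + by apply: hNB; rewrite ?lexx.
- case hh: (has (fun k => (y < k) && (k < x)) L).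
  + move/hasP: hh => [k kL /andP[yk kx]].
    have h1 : P y <-> P k.
      apply: IH; first exact: ltW.
      * rewrite -ltnS; apply: leq_trans hc; apply: (count_lt (k := k)) => //.
        - by move=> z /andP[a1 a2]; rewrite a1 /=; apply: lt_trans kx.
        - by rewrite yk kx.
        - by rewrite ltxx andbF.
      * move=> t yt tk; apply: hNB => //; apply: le_trans tk _; exact: ltW.
    have h2 : P k <-> P x.
      apply: IH; first exact: ltW.
      * rewrite -ltnS; apply: leq_trans hc; apply: (count_lt (k := k)) => //.
        - by move=> z /andP[a1 a2]; rewrite a2 andbT; apply: lt_trans yk a1.
        - by rewrite yk kx.
        - by rewrite ltxx.
      * move=> t kt tx; apply: hNB => //; apply: le_trans kt; exact: ltW.
    tauto.
  + case: (eqVneq y x) => [->//|nyx].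
    have yx' : y < x by rewrite lt_neqAle nyx yx.
    apply: (chain_base hSC yx').
    * by move=> k kL hk; move/hasP: hh; apply; exists k => //; apply/andP.
    * by apply: hNB; rewrite ?lexx.
    * by apply: hNB; rewrite ?lexx.
Qed.


Lemma realize (E : R -> Prop) (HE : elem_sub M E) (a b : R) : a <= b ->
  (forall c, E c -> ~ (a <= c /\ c <= b)) ->
  forall n A e, D n.+1 A -> size e = n -> tuple_in E e ->
  (A (rcons e a) <-> A (rcons e b)).
Proof.
move=> ab hE n A e hA he heE.
apply: NNPP => hneq.
have [l hl] := ds_omin hA he.
pose P := fun v => A (rcons e v).
have hSC : SCprop P (flatten (map ends l)) by apply: SC_omin.
pose L := flatten (map ends l).
have [t [ha [hb hNBt]]] : exists t, a <= t /\ t <= b /\ ~ NB P t.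
  apply: NNPP => hno; apply: hneq.
  apply: (chain hSC (N := count (fun k : R => (a < k)%R && (k < b)%R) L) ab (leqnn _)).
  move=> t h1 h2; apply: NNPP => hn; apply: hno; exists t; split => //.
have [B hB hBe] := ds_brk hA.
have Et : E t.
  apply: (fin_in_E HE (N := size L) (L := L) hB he heE (leqnn _)).
  - move=> t' /(hBe e t' he) hn; apply: NNPP => hL; apply: hn.
    by apply: (NB_notin hSC); apply/negP.
  - by apply/(hBe e t he).
exact: hE t Et (conj ha hb).
Qed.

End Tool.

Lemma vle_trans (R : rcfType) (O : R -> Prop) :
  (forall a b, O a -> O b -> O (a * b)) ->
  forall a b c, vle O a b -> vle O b c -> vle O a c.
Proof.
move=> hm a b c [o1 h1 ->] [o2 h2 ->]; exists (o2 * o1); first exact: hm.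
by rewrite mulrA.
Qed.

Lemma vle_frac (R : rcfType) (O : R -> Prop) :
  O 0 -> O 1 -> (forall a b c, O a -> O c -> a <= b -> b <= c -> O b) ->
  forall d d', 0 < d' <= d \/ d <= d' < 0 -> vle O d d'.
Proof.
move=> h0 h1 hc d d' hd.
have dn0 : d != 0 by case: hd => /andP[]; lra.
exists (d' / d); last by field.
apply: (hc 0 _ 1) => //.
- case: hd => /andP[h h']; first by apply: divr_ge0; lra.
  by rewrite -mulrNN -invrN; apply: divr_ge0; lra.
- case: hd => /andP[h h']; first by rewrite ler_pdivrMr; lra.
  by rewrite -mulrNN -invrN ler_pdivrMr; lra.
Qed.

Theorem lemma3p19 (R : rcfType) (M : omin_struct R) (O' E E1 : R -> Prop) (x : R) :
  Tconvex M O' ->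
  elem_sub M E -> elem_sub M E1 -> (forall a, E a -> E1 a) ->
  (exists a, ~ E1 a) ->
  (exists a, E a /\ ~ O' a) ->
  ~ E x ->
  ~ (exists y, E1 y /\ realizes_type M E x y) ->
  (weakly_immediate O' E x <-> weakly_immediate O' E1 x) /\
  (weakly_immediate O' E x -> same_cof O' x E E1).
Proof.
move=> [O0 [O1 [_ [Om [Oc _]]]]] HE HE1 hsub _ _ hxE hnr.
have x1 : ~ E1 x by move=> h; apply: hnr; exists x; split.
have tr := vle_trans Om.
have fr := vle_frac O0 O1 Oc.
have cut : forall c1, E1 c1 -> exists c, E c /\ vle O' (x - c1) (x - c).
  move=> c1 hc1.
  have nx : c1 != x by apply/eqP => h; apply: x1; rewrite -h.
  case: (ltgtP c1 x) => [c1x|xc1|e]; last by rewrite e eqxx in nx.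
  - apply: NNPP => hno.
    apply: hnr; exists c1; split => //.
    move=> n A e hA he heE.
    apply: (realize HE (ltW c1x) _ hA he heE) => c Ec [h1 h2].
    have cx : c != x by apply/eqP => h; apply: hxE; rewrite -h.
    apply: hno; exists c; split => //; apply: fr; left.
    by apply/andP; split; have := cx; rewrite neq_lt => /orP[]; lra.
  - apply: NNPP => hno.
    apply: hnr; exists c1; split => //.
    move=> n A e hA he heE; apply: iff_sym.
    apply: (realize HE (ltW xc1) _ hA he heE) => c Ec [h1 h2].
    have cx : c != x by apply/eqP => h; apply: hxE; rewrite -h.
    apply: hno; exists c; split => //; apply: fr; right.
    by apply/andP; split; have := cx; rewrite neq_lt => /orP[]; lra.
have wi : weakly_immediate O' E x <-> weakly_immediate O' E1 x.
  split.
  - move=> hw [c1 [hc1 hmax]]; apply: hw.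
    have [c [Ec hc]] := cut c1 hc1.
    exists c; split => // c' Ec'; apply: tr (hc); exact: hmax (hsub _ Ec').
  - move=> hw [c [Ec hmax]]; apply: hw; exists c; split; first exact: hsub.
    move=> c' E1c'; have [c'' [Ec'' h]] := cut c' E1c'.
    apply: tr h _; exact: hmax.
split => // _; split.
- move=> C2 [hC2 hcof].
  pose g := fun c2 => epsilon (inhabits 0) (fun c => E c /\ vle O' (x - c2) (x - c)).
  have hg : forall c2, C2 c2 -> E (g c2) /\ vle O' (x - c2) (x - g c2).
    move=> c2 hc2; exact: (epsilon_spec (inhabits 0) (fun c => E c /\ vle O' (x - c2) (x - c)) (cut c2 (hC2 _ hc2))).
  pose C1 := fun c => exists c2, C2 c2 /\ c = g c2.
  pose f := fun c => epsilon (inhabits 0) (fun c2 => C2 c2 /\ c = g c2).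
  have hf : forall c, C1 c -> C2 (f c) /\ c = g (f c).
    move=> c hc; exact: (epsilon_spec (inhabits 0) (fun c2 => C2 c2 /\ c = g c2) hc).
  exists C1; split.
  + split; first by move=> c [c2 [hc2 ->]]; exact: (hg _ hc2).1.
    move=> c' Ec'; have [c2 [hc2 h]] := hcof c' (hsub _ Ec').
    exists (g c2); split; first by exists c2.
    exact: tr h (hg _ hc2).2.
  + exists f; split; first by move=> a ha; exact: (hf a ha).1.
    move=> a b ha hb hab; rewrite (hf a ha).2 (hf b hb).2 hab //.
- move=> C2 [hC2 hcof]; exists C2; split.
  + split; first by move=> c hc; apply: hsub; exact: hC2.
    move=> c' E1c'; have [c [Ec h]] := cut c' E1c'.
    have [c2 [hc2 h2]] := hcof c Ec; exists c2; split => //; exact: tr h h2.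
  + by exists id; split.
Qed.
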